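(* For $n=2$ (so $d_2=\frac34$), $\lim_{h\to3/4}\tilde B_2(h)=\frac35$, and consequently the limit wave speed $c_0(h)=\frac{1}{1-\tilde B_2(h)}$ satisfies $\lim_{h\to3/4}c_0(h)=\frac52$.
   Context: For $n=2$: $W(u)=\frac{u^2}{2}-\frac{u^4}{12}$, $H(u,v)=\frac{v^2}{2}+W(u)$; for $h\in(0,\frac34)$, $\Gamma_h$ is the periodic orbit in $\{H=h\}$ surrounding the origin of $u'=v$, $v'=-u+\frac13u^3$, oriented clockwise; $\tilde B_2(h)=\oint_{\Gamma_h}u^2v\,du\big/\oint_{\Gamma_h}v\,du$. *)

(* Defs.v *)
From Stdlib Require Import Reals.
From Coquelicot Require Import Coquelicot.
Open Scope R_scope.

Definition W (u : R) : R := u ^ 2 / 2 - u ^ 4 / 12.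
Definition Ham (u v : R) : R := v ^ 2 / 2 + W u.

(* d_2 = dcrit = W(sqrt 3) = 3/4, the energy of the saddle points (+-sqrt 3, 0). *)
Definition dcrit : R := 3 / 4.

(* Turning point of the periodic orbit Gamma_h, 0 < h < 3/4:
   the unique a in (0, sqrt 3) with W a = h, i.e. a^2 = 3 - sqrt(9 - 12 h)
   (the smaller positive root of u^4 - 6 u^2 + 12 h = 0). *)
Definition turn (h : R) : R := sqrt (3 - sqrt (9 - 12 * h)).

Definition vplus (h u : R) : R := sqrt (2 * (h - W u)).

(* Line integral  \oint_{Gamma_h} P(u,v) du  of the 1-form P du along the
   periodic orbit Gamma_h, oriented clockwise (the flow u' = v moves to the
   right on the upper arc v > 0 and to the left on the lower arc v < 0). *)
Definition oint_du (P : R -> R -> R) (h : R) : R :=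
  RInt (fun u => P u (vplus h u)) (- turn h) (turn h)
  + RInt (fun u => P u (- vplus h u)) (turn h) (- turn h).

Definition B2t (h : R) : R :=
  oint_du (fun u v => u ^ 2 * v) h / oint_du (fun _ v => v) h.

Definition c0 (h : R) : R := 1 / (1 - B2t h).

(* Main.v *)
Require Import Defs.
From Stdlib Require Import Reals Lra Psatz.
From Coquelicot Require Import Coquelicot.
Open Scope R_scope.

Lemma sqrt_holder x y : x <= y -> 0 <= sqrt y - sqrt x <= sqrt (y - x).
Proof.
  intros Hxy. split.
  - assert (sqrt x <= sqrt y) by (apply sqrt_le_1_alt; lra). lra.
  - destruct (Rle_or_lt x 0) as [Hx|Hx].
    + rewrite (sqrt_neg_0 x Hx). assert (sqrt y <= sqrt (y - x)) by (apply sqrt_le_1_alt; lra). lra.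
    + set (p := sqrt x). set (q := sqrt (y - x)).
      assert (Hp : 0 <= p) by apply sqrt_pos. assert (Hq : 0 <= q) by apply sqrt_pos.
      assert (Hp2 : p * p = x) by (apply sqrt_sqrt; lra).
      assert (Hq2 : q * q = y - x) by (apply sqrt_sqrt; lra).
      assert (sqrt y <= sqrt ((p + q) * (p + q))) by (apply sqrt_le_1_alt; nra).
      rewrite sqrt_square in H by lra. lra.
Qed.

Lemma cont_vplus h u : continuous (vplus h) u.
Proof.
  unfold vplus. apply continuous_sqrt_comp. apply (@ex_derive_continuous R_AbsRing R_NormedModule (fun x => 2 * (h - W x))).
  unfold W. auto_derive. auto.
Qed.

Lemma ex_g (k : R -> R) h a b : (forall u, continuous k u) ->
  ex_RInt (fun u => k u * vplus h u) a b.
Proof.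
  intros Hk. apply (@ex_RInt_continuous R_CompleteNormedModule). intros z _.
  apply (continuous_mult k (vplus h)); [apply Hk | apply cont_vplus].
Qed.

Definition J (k : R -> R) h := RInt (fun u => k u * vplus h u) (- turn h) (turn h).

Lemma oint_J k h : (forall u, continuous k u) ->
  oint_du (fun u v => k u * v) h = 2 * J k h.
Proof.
  intros Hk. unfold oint_du, J.
  rewrite (RInt_ext (fun u => k u * - vplus h u) (fun u => opp (k u * vplus h u))).
  2:{ intros. unfold opp; simpl. ring. }
  rewrite (@RInt_opp R_CompleteNormedModule) by (apply ex_g; auto).
  rewrite (@opp_RInt_swap R_CompleteNormedModule) by (apply ex_g; auto).
  ring.
Qed.

Lemma turn_le h : 0 <= turn h <= sqrt 3.
Proof.
  unfold turn. split. apply sqrt_pos. apply sqrt_le_1_alt.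
  pose proof (sqrt_pos (9 - 12 * h)). lra.
Qed.

Lemma turn34 : turn (3/4) = sqrt 3.
Proof. unfold turn. replace (9 - 12 * (3/4)) with 0 by lra. rewrite sqrt_0. f_equal; lra. Qed.

Lemma abs_mult_le a b A B : Rabs a <= A -> Rabs b <= B -> Rabs (a * b) <= A * B.
Proof.
  intros Ha Hb. rewrite Rabs_mult. apply Rmult_le_compat; auto using Rabs_pos.
Qed.

Lemma J_bound k h : (forall u, continuous k u) ->
  (forall u, - sqrt 3 <= u <= sqrt 3 -> Rabs (k u) <= 3) -> h < 3/4 ->
  Rabs (J k h - J k (3/4)) <= 6 * sqrt 3 * sqrt (2 * (3/4 - h)) + 12 * (sqrt 3 - turn h).
Proof.
  intros Hk Hb Hh. unfold J. rewrite turn34.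
  pose proof (turn_le h) as [Ha0 Has].
  set (a := turn h) in *. set (s := sqrt 3) in *.
  set (gh := fun u => k u * vplus h u). set (g0 := fun u => k u * vplus (3/4) u).
  assert (E1 := RInt_Chasles g0 (-s) (-a) s (ex_g k _ _ _ Hk) (ex_g k _ _ _ Hk)).
  assert (E2 := RInt_Chasles g0 (-a) a s (ex_g k _ _ _ Hk) (ex_g k _ _ _ Hk)).
  assert (E3 := RInt_minus gh g0 (-a) a (ex_g k _ _ _ Hk) (ex_g k _ _ _ Hk)).
  change plus with Rplus in E1, E2. change minus with Rminus in E3.
  simpl in E1, E2, E3.
  change (Rabs (RInt gh (-a) a - RInt g0 (-s) s) <= 6 * s * sqrt (2 * (3/4 - h)) + 12 * (s - a)).
  rewrite <- E1, <- E2.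
  replace (RInt gh (- a) a - (RInt g0 (- s) (- a) + (RInt g0 (- a) a + RInt g0 a s)))
    with ((RInt gh (- a) a - RInt g0 (- a) a) - RInt g0 (- s) (- a) - RInt g0 a s) by ring.
  rewrite <- E3.
  assert (B1 : Rabs (RInt (fun x => minus (gh x) (g0 x)) (- a) a) <= (a - - a) * (3 * sqrt (2 * (3/4 - h)))).
  { apply abs_RInt_le_const. lra.
    apply (@ex_RInt_minus R_CompleteNormedModule); apply ex_g; auto.
    intros t Ht. change minus with Rminus; simpl. unfold gh, g0.
    replace (k t * vplus h t - k t * vplus (3 / 4) t) with (k t * (vplus h t - vplus (3/4) t)) by ring.
    apply abs_mult_le. apply Hb; lra.
    unfold vplus. destruct (sqrt_holder (2 * (h - W t)) (2 * (3/4 - W t))) as [H1 H2]. lra.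
    rewrite Rabs_left1 by lra.
    replace (2 * (3 / 4 - W t) - 2 * (h - W t)) with (2 * (3/4 - h)) in H2 by ring. lra. }
  assert (Bg0 : forall t, - s <= t <= s -> Rabs (g0 t) <= 3 * 2).
  { intros t Ht. apply abs_mult_le. apply Hb; lra.
    unfold vplus. rewrite Rabs_pos_eq by apply sqrt_pos.
    replace 2 with (sqrt 4) at 2. apply sqrt_le_1_alt.
    assert (s * s = 3) by (apply sqrt_sqrt; lra).
    assert (0 <= s) by apply sqrt_pos.
    unfold W. assert (t * t <= 3) by nra. nra.
    replace 4 with (2*2) by lra. rewrite sqrt_square; lra. }
  assert (B2 : Rabs (RInt g0 (- s) (- a)) <= (- a - - s) * (3 * 2)).
  { apply abs_RInt_le_const. lra. apply ex_g; auto. intros; apply Bg0; lra. }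
  assert (B3 : Rabs (RInt g0 a s) <= (s - a) * (3 * 2)).
  { apply abs_RInt_le_const. lra. apply ex_g; auto. intros; apply Bg0; lra. }
  pose proof (sqrt_pos (2 * (3 / 4 - h))).
  set (I1 := RInt (fun x => minus (gh x) (g0 x)) (- a) a) in *.
  set (I2 := RInt g0 (- s) (- a)) in *. set (I3 := RInt g0 a s) in *.
  assert (Rabs (I1 - I2 - I3) <= Rabs I1 + Rabs I2 + Rabs I3).
  { unfold Rminus. eapply Rle_trans. apply Rabs_triang. rewrite Rabs_Ropp.
    eapply Rle_trans. apply Rplus_le_compat_r. apply Rabs_triang. rewrite Rabs_Ropp. lra. }
  assert (a * sqrt (2 * (3 / 4 - h)) <= s * sqrt (2 * (3 / 4 - h))) by (apply Rmult_le_compat_r; lra).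
  replace (RInt (fun x => gh x - g0 x) (-a) a) with I1 by reflexivity.
  lra.
Qed.

Definition Rf h := 6 * sqrt 3 * sqrt (2 * (3/4 - h)) + 12 * (sqrt 3 - turn h).

Lemma Rf_cont : continuous Rf (3/4).
Proof.
  unfold Rf, turn.
  apply (continuous_plus (fun h => 6 * sqrt 3 * sqrt (2 * (3/4 - h))) (fun h => 12 * (sqrt 3 - sqrt (3 - sqrt (9 - 12 * h))))).
  - apply (continuous_mult (fun _ => 6 * sqrt 3) (fun h => sqrt (2 * (3/4 - h)))).
    apply continuous_const.
    apply continuous_sqrt_comp. apply (@ex_derive_continuous R_AbsRing R_NormedModule). auto_derive; auto.
  - apply (continuous_mult (fun _ => 12) (fun h => (sqrt 3 - sqrt (3 - sqrt (9 - 12 * h))))).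
    apply continuous_const.
    apply (continuous_minus (fun _ => sqrt 3) (fun h => sqrt (3 - sqrt (9 - 12 * h)))).
    apply continuous_const.
    apply continuous_sqrt_comp.
    apply (continuous_minus (fun _ => 3) (fun h => sqrt (9 - 12 * h))).
    apply continuous_const.
    apply continuous_sqrt_comp. apply (@ex_derive_continuous R_AbsRing R_NormedModule). auto_derive; auto.
Qed.

Lemma Rf34 : Rf (3/4) = 0.
Proof. unfold Rf. rewrite turn34. replace (2 * (3/4 - 3/4)) with 0 by lra. rewrite sqrt_0. ring. Qed.

Lemma J_lim k : (forall u, continuous k u) ->
  (forall u, - sqrt 3 <= u <= sqrt 3 -> Rabs (k u) <= 3) ->
  filterlim (J k) (at_left (3/4)) (locally (J k (3/4))).
Proof.
  intros Hk Hb. apply filterlim_locally. intros eps.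
  pose proof Rf_cont as HC. unfold continuous in HC. rewrite Rf34 in HC.
  apply filterlim_locally with (eps := eps) in HC.
  unfold at_left, within. eapply filter_imp; [|exact HC].
  intros h Hh Hlt. simpl in Hh |- *. unfold ball in Hh |- *; simpl in Hh |- *.
  unfold AbsRing_ball in Hh |- *. change abs with Rabs in Hh |- *. change minus with Rminus in Hh |- *.
  simpl in Hh |- *.
  pose proof (J_bound k h Hk Hb Hlt). fold (Rf h) in H.
  rewrite Rminus_0_r in Hh. pose proof (Rle_abs (Rf h)). lra.
Qed.

Lemma s2 : sqrt 3 * sqrt 3 = 3.
Proof. apply sqrt_sqrt; lra. Qed.
Lemma s6 : 0 < sqrt 6.
Proof. apply sqrt_lt_R0; lra. Qed.

Lemma v34 u : - sqrt 3 <= u <= sqrt 3 -> vplus (3/4) u = (3 - u^2) / sqrt 6.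
Proof.
  intros Hu. pose proof s2. pose proof (sqrt_pos 3). pose proof s6.
  assert (Hu2 : u * u <= 3) by nra.
  unfold vplus, W.
  replace (2 * (3 / 4 - (u ^ 2 / 2 - u ^ 4 / 12))) with (((3 - u^2) / sqrt 6) * ((3 - u^2) / sqrt 6)).
  apply sqrt_square. apply Rmult_le_pos. nra. left; apply Rinv_0_lt_compat; lra.
  field_simplify; [|lra]. rewrite pow2_sqrt by lra. field.
Qed.

Lemma J_val k F : (forall x, is_derive F x (k x * ((3 - x^2) / sqrt 6))) ->
  (forall x, continuous (fun x => k x * ((3 - x^2) / sqrt 6)) x) ->
  J k (3/4) = F (sqrt 3) - F (- sqrt 3).
Proof.
  intros HD HC. unfold J. rewrite turn34.
  rewrite (RInt_ext _ (fun x => k x * ((3 - x^2) / sqrt 6))).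
  2:{ intros x Hx. rewrite v34; auto. pose proof (sqrt_pos 3).
      rewrite Rmin_left in Hx by lra. rewrite Rmax_right in Hx by lra. lra. }
  apply is_RInt_unique. apply (@is_RInt_derive R_CompleteNormedModule F); auto.
Qed.

Lemma J2_val : J (fun u => u^2) (3/4) = 12 * sqrt 3 / (5 * sqrt 6).
Proof.
  pose proof s6. pose proof s2.
  rewrite (J_val _ (fun x => (x^3 - x^5/5) / sqrt 6)).
  - field_simplify; try lra. replace (sqrt 3 ^ 5) with (9 * sqrt 3).
    2:{ replace (sqrt 3 ^ 5) with ((sqrt 3 * sqrt 3) * (sqrt 3 * sqrt 3) * sqrt 3) by ring. rewrite s2. ring. }
    replace (sqrt 3 ^ 3) with (3 * sqrt 3).
    2:{ replace (sqrt 3 ^ 3) with ((sqrt 3 * sqrt 3) * sqrt 3) by ring. rewrite s2. ring. }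
    match goal with |- ?a = ?b => change (@eq R a b) end; field; lra.
  - intros x. auto_derive; try lra; field; lra.
  - intros x. apply (@ex_derive_continuous R_AbsRing R_NormedModule). auto_derive; lra.
Qed.

Lemma J1_val : J (fun _ => 1) (3/4) = 4 * sqrt 3 / sqrt 6.
Proof.
  pose proof s6. pose proof s2.
  rewrite (J_val _ (fun x => (3 * x - x^3/3) / sqrt 6)).
  - replace (sqrt 3 ^ 3) with (3 * sqrt 3).
    2:{ replace (sqrt 3 ^ 3) with ((sqrt 3 * sqrt 3) * sqrt 3) by ring. rewrite s2. ring. }
    replace ((- sqrt 3) ^ 3) with (- (3 * sqrt 3)).
    2:{ replace ((- sqrt 3) ^ 3) with (- ((sqrt 3 * sqrt 3) * sqrt 3)) by ring. rewrite s2. ring. }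
    match goal with |- ?a = ?b => change (@eq R a b) end; field; lra.
  - intros x. auto_derive; try lra; field; lra.
  - intros x. apply (@ex_derive_continuous R_AbsRing R_NormedModule). auto_derive; lra.
Qed.

Lemma B2t_eq h : B2t h = J (fun u => u^2) h * / J (fun _ => 1) h.
Proof.
  unfold B2t.
  assert (E1 : oint_du (fun u v => u ^ 2 * v) h = 2 * J (fun u => u^2) h).
  { apply (oint_J (fun u => u^2)). intros u. apply (@ex_derive_continuous R_AbsRing R_NormedModule). auto_derive; auto. }
  assert (E2 : oint_du (fun _ v => v) h = 2 * J (fun _ => 1) h).
  { rewrite <- (oint_J (fun _ => 1)) by (intros; apply continuous_const).
    unfold oint_du. f_equal; apply RInt_ext; intros; match goal with |- ?a = ?b => change (@eq R a b) end; ring. }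
  rewrite E1, E2. set (a := J _ h). set (b := J _ h).
  destruct (Req_dec b 0) as [Hb|Hb].
  - rewrite Hb, Rmult_0_r. unfold Rdiv. rewrite Rinv_0. ring.
  - field. auto.
Qed.

Lemma quot_lim A B : B <> 0 ->
  filterlim (fun p : R * R => fst p * / snd p) (filter_prod (locally A) (locally B)) (locally (A * / B)).
Proof.
  intros HB.
  apply (filterlim_comp_2 (G := locally A) (H := locally (/ B)) (fun p : R * R => fst p) (fun p : R * R => / snd p) Rmult).
  - apply filterlim_fst.
  - apply (filterlim_comp _ _ _ (fun p : R * R => snd p) Rinv _ (locally B)).
    apply filterlim_snd.
    apply (@ex_derive_continuous R_AbsRing R_NormedModule). auto_derive; auto.
  - apply (filterlim_mult A (/ B)).
Qed.

Theorem mainTheorem7 :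
  filterlim B2t (at_left dcrit) (locally (3 / 5)) /\
  filterlim c0 (at_left dcrit) (locally (5 / 2)).
Proof.
  assert (HB : filterlim B2t (at_left dcrit) (locally (3 / 5))).
  { unfold dcrit.
    apply (filterlim_ext (fun h => J (fun u => u^2) h * / J (fun _ => 1) h)).
    intros; symmetry; apply B2t_eq.
    pose proof s6. pose proof s2. pose proof (sqrt_pos 3).
    assert (0 < sqrt 3) by (apply sqrt_lt_R0; lra).
    replace (3/5) with (J (fun u => u^2) (3/4) * / J (fun _ => 1) (3/4)).
    2:{ rewrite J2_val, J1_val. field. lra. }
    apply (filterlim_comp_2 (G := locally (J (fun u => u^2) (3/4))) (H := locally (J (fun _ => 1) (3/4))) (J (fun u => u^2)) (J (fun _ => 1)) (fun x y => x * / y)).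
    - apply J_lim. intros u. apply (@ex_derive_continuous R_AbsRing R_NormedModule). auto_derive; auto.
      intros u Hu. rewrite Rabs_pos_eq by nra. nra.
    - apply J_lim. intros u. apply continuous_const.
      intros u Hu. rewrite Rabs_R1. lra.
    - apply quot_lim. rewrite J1_val. apply Rgt_not_eq. apply Rlt_gt. apply Rdiv_lt_0_compat; lra. }
  split; auto.
  unfold c0.
  apply (filterlim_comp _ _ _ B2t (fun x => 1 / (1 - x)) _ (locally (3/5))); auto.
  replace (5/2) with (1 / (1 - 3/5)) by field.
  assert (HC : continuous (fun x => 1 / (1 - x)) (3/5)).
  { apply (@ex_derive_continuous R_AbsRing R_NormedModule). auto_derive. lra. }
  exact HC.
Qed.
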